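(* Let $\Lambda$ be a recursive $\varepsilon$-number, and let $I$, $H$, $R_n^\alpha$, $S_n^\alpha$ be as in the context. For all $x, y \in H$, $n<\omega$ and $\alpha<\Lambda$: $x S_n^\alpha y$ if and only if $x R_n^\alpha y$.
   Context: Fix a recursive ordinal $\Lambda$ that is an $\varepsilon$-number, i.e. $\omega^\Lambda = \Lambda$. The ordinal logarithm is defined by $\ell(0)=0$ and $\ell(\alpha+\omega^\beta)=\beta$. An $\ell$-sequence is a sequence of ordinals $x=\langle x_0,x_1,\dots\rangle$ indexed by $\omega$ with $x_{i+1}\le \ell(x_i)$ for all $i<\omega$. Let $I$ be the set of $\ell$-sequences all of whose entries are $<\Lambda$, and $H\subseteq I$ the set of those $x\in I$ with $x_j=0$ for some $j<\omega$. For $n<\omega$, define $x R_n y$ for $x,y\in I$ (and $x S_n y$ for $x,y\in H$, same condition) by: $x_m>y_m$ for all $m\le n$ and $x_i\ge y_i$ for all $i>n$. Define $R_n^\alpha$ on $I$ recursively: $x R_n^0 y$ iff $x=y$; $x R_n^{1+\alpha} y$ iff for every $\beta<1+\alpha$ there is $z\in I$ with $x R_n z$ and $z R_n^\beta y$. Define $S_n^\alpha$ on $H$ in the same way, with $S_n$ in place of $R_n$ and $z$ ranging over $H$. *)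

(* Defs.v *)
From mathcomp Require Import all_boot.
Set Implicit Arguments. Unset Strict Implicit. Unset Printing Implicit Defensive.

(** The ordinals < Lambda are represented by the elements of a (decidable,
  i.e. boolean) strict well-order [olt] on [nat] of order type Lambda.
  The Cantor-normal-form map [cnf] is an order isomorphism between
  (nat, olt) and the finitely supported functions L -> nat ordered as
  omega^L (compare at the olt-largest point of difference):
     alpha = sum_{beta} omega^beta * cnf alpha beta.
  Such an isomorphism exists iff omega^Lambda = Lambda. *)

Definition omega_lt (olt : rel nat) (f g : nat -> nat) : Prop :=
  exists p, f p < g p /\ forall q, olt p q -> f q = g q.

Definition fin_supp (f : nat -> nat) : Prop :=
  exists s : seq nat, forall p, f p != 0 -> p \in s.

Record eps_number := EpsNumber {
  olt : rel nat;
  olt_irr : forall a, ~~ olt a a;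
  olt_trans : forall a b c, olt a b -> olt b c -> olt a c;
  olt_total : forall a b, a != b -> olt a b || olt b a;
  olt_wf : well_founded (fun a b => olt a b);
  cnf : nat -> nat -> nat;
  cnf_fin : forall a, fin_supp (cnf a);
  cnf_onto : forall f, fin_supp f -> exists a, forall p, cnf a p = f p;
  cnf_mono : forall a b, olt a b <-> omega_lt olt (cnf a) (cnf b)
}.

Section Defs.
Variable L : eps_number.

Definition ole (a b : nat) : bool := (a == b) || olt L a b.

Definition is_zero (a : nat) : Prop := forall b, ole a b.

(* ell a = b : ell(0) = 0 and ell(alpha' + omega^beta) = beta, i.e. beta is the
   smallest exponent occurring in the Cantor normal form of alpha *)
Definition is_log (a b : nat) : Prop :=
  ((forall p, cnf L a p = 0) /\ is_zero b) \/
  (cnf L a b != 0 /\ forall q, olt L q b -> cnf L a q = 0).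

Definition in_I (x : nat -> nat) : Prop :=
  forall i b, is_log (x i) b -> ole (x i.+1) b.

Definition in_H (x : nat -> nat) : Prop :=
  in_I x /\ exists j, is_zero (x j).

Definition Rn (n : nat) (x y : nat -> nat) : Prop :=
  (forall m, m <= n -> olt L (y m) (x m)) /\
  (forall i, n < i -> ole (y i) (x i)).

(* iterated relation: D is the domain over which z ranges (I or H).
   it_rel D n 0 x y <-> x = y ;
   for gamma > 0 (gamma = 1 + alpha):
   it_rel D n gamma x y <-> forall beta < gamma, exists z in D,
                             x R_n z /\ it_rel D n beta z y. *)
Definition it_rel (D : (nat -> nat) -> Prop) (n : nat) :
  nat -> (nat -> nat) -> (nat -> nat) -> Prop :=
  Fix (olt_wf L) (fun _ => (nat -> nat) -> (nat -> nat) -> Prop)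
    (fun g rec x y =>
       (is_zero g -> x = y) /\
       (~ is_zero g -> forall b (hb : olt L b g),
            exists z, D z /\ Rn n x z /\ rec b hb z y)).

Definition Rna (n alpha : nat) := it_rel in_I n alpha.
Definition Sna (n alpha : nat) := it_rel in_H n alpha.

End Defs.

(* Main.v *)
Require Import Defs.
From mathcomp Require Import all_boot.
From Stdlib Require Import FunctionalExtensionality.

Lemma it_rel_eq (L : eps_number) D n g x y :
  it_rel L D n g x y <->
  ((is_zero L g -> x = y) /\
   (~ is_zero L g -> forall b, olt L b g ->
        exists z, D z /\ Rn L n x z /\ it_rel L D n b z y)).
Proof.
rewrite /it_rel Fix_eq.
  split => -[h1 h2]; split => // nz b hb; exact: h2.
move=> a f h E.
have -> : f = h.
  apply: functional_extensionality_dep => b.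
  apply: functional_extensionality_dep => p; exact: E.
by [].
Qed.

Lemma zero_down (L : eps_number) a b : is_zero L a -> ole L b a -> is_zero L b.
Proof.
move=> za; rewrite /ole => /orP[/eqP -> //|hba].
have := za b; rewrite /ole => /orP[/eqP e|hab].
  by rewrite e in hba; move: (olt_irr L b); rewrite hba.
by move: (olt_irr L a); rewrite (olt_trans hab hba).
Qed.

Lemma H_down (L : eps_number) n x z : in_H L x -> in_I L z -> Rn L n x z -> in_H L z.
Proof.
move=> [_ [j zj]] Iz [h1 h2]; split => //; exists j.
case: (leqP j n) => hj.
  have := h1 j hj => hlt.
  have := zj (z j); rewrite /ole => /orP[/eqP e|hab].
    by rewrite e in hlt; move: (olt_irr L (z j)); rewrite hlt.
  by move: (olt_irr L (z j)); rewrite (olt_trans hlt hab).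
exact: zero_down zj (h2 j hj).
Qed.

Theorem proposition4p7 (L : eps_number) (x y : nat -> nat) (n alpha : nat) :
  in_H L x -> in_H L y -> (Sna L n alpha x y <-> Rna L n alpha x y).
Proof.
move=> Hx _; move: x Hx.
pattern alpha; apply: (well_founded_induction (olt_wf L)) => a IH x Hx.
rewrite /Sna /Rna; split => /it_rel_eq [h1 h2]; apply/it_rel_eq; split => // nz b hb.
  have [z [Hz [R Sz]]] := h2 nz b hb.
  exists z; split; first by case: Hz.
  split => //; apply/(IH b hb z Hz); exact: Sz.
have [z [Iz [R Rz]]] := h2 nz b hb.
have Hz := @H_down L n x z Hx Iz R.
exists z; split => //; split => //; apply/(IH b hb z Hz); exact: Rz.
Qed.
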